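(* If $X$ is a Lindelöf $\Sigma$-space with $nw(X)\leq\mathfrak c$, then $|C(X)|\leq\mathfrak c$ and $w(X)\leq\mathfrak c$.
   Context: All spaces are Tychonoff. $C(X)$ is the set of continuous real-valued functions on $X$; $nw$ is network weight, $w$ weight, $\mathfrak c=2^\omega$. The Nagami number $Nag(X)$ is the minimal cardinality of a family $\mathcal F$ of closed subsets of $\beta X$ such that for every $x\in X$ and $y\in\beta X\setminus X$ there is $F\in\mathcal F$ with $x\in F$, $y\notin F$. $X$ is a Lindelöf $\Sigma$-space if $Nag(X)\leq\omega$. *)

(* Defs.v *)
From Stdlib Require Import Reals List.
Open Scope R_scope.

Record topology (T : Type) := Topology {
  is_open : (T -> Prop) -> Prop;
  open_full : is_open (fun _ => True);
  open_inter : forall U V, is_open U -> is_open V -> is_open (fun x => U x /\ V x);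
  open_union : forall F : (T -> Prop) -> Prop,
      (forall U, F U -> is_open U) -> is_open (fun x => exists U, F U /\ U x)
}.
Arguments is_open {T} _ _.

Definition is_closed {T} (t : topology T) (C : T -> Prop) : Prop :=
  is_open t (fun x => ~ C x).

Definition R_open (U : R -> Prop) : Prop :=
  forall x, U x -> exists eps, eps > 0 /\ forall y, Rabs (y - x) < eps -> U y.

Definition continuous_R {T} (t : topology T) (f : T -> R) : Prop :=
  forall U, R_open U -> is_open t (fun x => U (f x)).

Definition continuous_map {T S} (t : topology T) (s : topology S) (f : T -> S) : Prop :=
  forall U, is_open s U -> is_open t (fun x => U (f x)).

Definition T1 {T} (t : topology T) : Prop :=
  forall x y : T, x <> y -> exists U, is_open t U /\ U x /\ ~ U y.

Definition hausdorff {T} (t : topology T) : Prop :=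
  forall x y : T, x <> y -> exists U V, is_open t U /\ is_open t V /\ U x /\ V y /\
    forall z, ~ (U z /\ V z).

Definition tychonoff {T} (t : topology T) : Prop :=
  T1 t /\
  forall (C : T -> Prop) (x : T), is_closed t C -> ~ C x ->
    exists f : T -> R, continuous_R t f /\ f x = 0 /\ forall y, C y -> f y = 1.

Definition compact {T} (t : topology T) : Prop :=
  forall F : (T -> Prop) -> Prop,
    (forall U, F U -> is_open t U) -> (forall x, exists U, F U /\ U x) ->
    exists l : list (T -> Prop), (forall U, In U l -> F U) /\
      forall x, exists U, In U l /\ U x.

(* (K, e) is a Stone-Cech compactification of X: K compact Hausdorff,
   e a dense embedding, and every bounded continuous real function on X
   extends continuously to K. *)
Definition stone_cech {X K} (tX : topology X) (tK : topology K) (e : X -> K) : Prop :=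
  compact tK /\ hausdorff tK /\
  continuous_map tX tK e /\
  (forall x y, e x = e y -> x = y) /\
  (forall U, is_open tX U -> exists V, is_open tK V /\ forall x, U x <-> V (e x)) /\
  (forall V, is_open tK V -> (exists y, V y) -> exists x, V (e x)) /\
  (forall f : X -> R, continuous_R tX f -> (exists M, forall x, Rabs (f x) <= M) ->
     exists g : K -> R, continuous_R tK g /\ forall x, g (e x) = f x).

(* Nag(X) <= omega, computed in the Stone-Cech compactification (K, e). *)
Definition nagami_le_omega {X K} (tK : topology K) (e : X -> K) : Prop :=
  exists F : nat -> (K -> Prop),
    (forall n, is_closed tK (F n)) /\
    forall (x : X) (y : K), ~ (exists x', e x' = y) ->
      exists n, F n (e x) /\ ~ F n y.

(* The continuum c = |nat -> bool|. *)
Definition cont := nat -> bool.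

Definition nw_le_c {X} (tX : topology X) : Prop :=
  exists N : cont -> (X -> Prop),
    forall U x, is_open tX U -> U x ->
      exists i, N i x /\ forall y, N i y -> U y.

Definition w_le_c {X} (tX : topology X) : Prop :=
  exists B : cont -> (X -> Prop),
    (forall i, is_open tX (B i)) /\
    forall U x, is_open tX U -> U x ->
      exists i, B i x /\ forall y, B i y -> U y.

Definition card_CX_le_c {X} (tX : topology X) : Prop :=
  exists g : (X -> R) -> cont,
    forall f1 f2, continuous_R tX f1 -> continuous_R tX f2 -> g f1 = g f2 -> f1 = f2.

(* Main.v *)
Require Import Defs.
From Stdlib Require Import Reals ZArith List Lra Lia Classical ClassicalEpsilon FunctionalExtensionality PropExtensionality Cantor PeanoNat.
Open Scope R_scope.

Lemma set_ext {T} (U V : T -> Prop) : (forall x, U x <-> V x) -> U = V.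
Proof. intros H; apply functional_extensionality; intros x; apply propositional_extensionality; apply H. Qed.

Lemma open_ext {T} (t : topology T) U V : (forall x, U x <-> V x) -> is_open t U -> is_open t V.
Proof. intros H HU; rewrite <- (set_ext U V H); exact HU. Qed.

Lemma open_empty {T} (t : topology T) : is_open t (fun _ => False).
Proof. apply (open_ext t (fun x => exists U, False /\ U x)). firstorder. apply open_union. tauto. Qed.

Lemma open_ex {T} (t:topology T) {I:Type} (O : I -> T -> Prop) : (forall i, is_open t (O i)) -> is_open t (fun x => exists i, O i x).
Proof. intros H. apply (open_ext t (fun x => exists W, (exists i, W = O i) /\ W x)).
 - intros x; split. intros [W [[i ->] Hw]]; eauto. intros [i h]; exists (O i); eauto.
 - apply open_union. intros W [i ->]; auto. Qed.

Lemma open_or {T} (t:topology T) U V : is_open t U -> is_open t V -> is_open t (fun x => U x \/ V x).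
Proof. intros. apply (open_ext t (fun x => exists W, (W = U \/ W = V) /\ W x)).
 - intros x; split. intros [W [[->| ->] Hw]]; auto. intros [h|h]; eauto.
 - apply open_union. intros W [->| ->]; auto. Qed.

Lemma open_cond {T} (t:topology T) (P:Prop) U : (P -> is_open t U) -> is_open t (fun x => P /\ U x).
Proof. intros H. destruct (classic P) as [p|np].
 - apply (open_ext t U). tauto. auto.
 - apply (open_ext t (fun _ => False)). tauto. apply open_empty. Qed.

Lemma open_imp {T} (t:topology T) (P:Prop) U : (P -> is_open t U) -> is_open t (fun x => P -> U x).
Proof. intros H. destruct (classic P) as [p|np].
 - apply (open_ext t U). tauto. auto.
 - apply (open_ext t (fun _ => True)). tauto. apply open_full. Qed.

Lemma open_list_all {T} (t:topology T) {I} (l : list I) (O : I -> T -> Prop) : (forall i, In i l -> is_open t (O i)) -> is_open t (fun x => forall i, In i l -> O i x).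
Proof. induction l as [|a l IHl]; intros H.
 - apply (open_ext t (fun _ => True)). simpl; tauto. apply open_full.
 - apply (open_ext t (fun x => O a x /\ (forall i, In i l -> O i x))).
   + intros x; simpl; split. intros [h1 h2] i [<-|hi]; auto. intros h; split; auto.
   + apply open_inter; auto. apply H; simpl; auto. apply IHl; intros; apply H; simpl; auto. Qed.

Lemma closed_compl {T} (t:topology T) U : is_open t U -> is_closed t (fun x => ~ U x).
Proof. intros H. unfold is_closed. apply (open_ext t U). intros x; split; [tauto| apply NNPP]. auto. Qed.

Lemma closed_and {T} (t:topology T) A B : is_closed t A -> is_closed t B -> is_closed t (fun x => A x /\ B x).
Proof. unfold is_closed; intros HA HB. apply (open_ext t (fun x => ~ A x \/ ~ B x)). intros; tauto. apply open_or; auto. Qed.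

Lemma closed_all {T} (t:topology T) {I} (A : I -> T -> Prop) : (forall i, is_closed t (A i)) -> is_closed t (fun x => forall i, A i x).
Proof. unfold is_closed; intros H. apply (open_ext t (fun x => exists i, ~ A i x)).
 intros x; split. intros [i h] h'; auto. intros h; apply not_all_ex_not; auto. apply open_ex; auto. Qed.

Lemma closed_imp {T} (t:topology T) (P:Prop) A : (P -> is_closed t A) -> is_closed t (fun x => P -> A x).
Proof. unfold is_closed; intros H. apply (open_ext t (fun x => P /\ ~ A x)). intros; tauto. apply open_cond; auto. Qed.

Lemma compact_closed_cover {K} (tK : topology K) (Y : K -> Prop) {I : Type} (O : I -> K -> Prop) :
  Defs.compact tK -> is_closed tK Y -> (forall i, is_open tK (O i)) ->
  (forall y, Y y -> exists i, O i y) ->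
  exists l : list I, forall y, Y y -> exists i, In i l /\ O i y.
Proof.
  intros HK HY HO Hcov.
  destruct (HK (fun U => U = (fun z => ~ Y z) \/ exists i, U = O i)) as [l [Hl Hc]].
  - intros U [->|[i ->]]; auto.
  - intros z. destruct (classic (Y z)) as [h|h].
    + destruct (Hcov z h) as [i hi]. exists (O i). eauto.
    + exists (fun z => ~ Y z). auto.
  - assert (Hmain : exists l' : list I, forall U, In U l -> forall y, Y y -> U y -> exists i, In i l' /\ O i y).
    { clear Hc. induction l as [|U l IH].
      - exists nil. intros U [].
      - destruct IH as [l' Hl']. intros V HV; apply Hl; simpl; auto.
        destruct (Hl U (or_introl eq_refl)) as [->|[i ->]].
        + exists l'. intros V [<-|HV] y Yy HVy. contradiction. eauto.
        + exists (i :: l'). intros V [<-|HV] y Yy HVy. exists i; simpl; auto.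
          destruct (Hl' V HV y Yy HVy) as [j [hj1 hj2]]; exists j; simpl; auto. }
    destruct Hmain as [l' Hl']. exists l'. intros y Yy. destruct (Hc y) as [U [HU HUy]]. eauto.
Qed.
Definition Gs {K} (F : nat -> K -> Prop) (n : nat) (z : K) : Prop := forall t, Nat.testbit n t = true -> F t z.

Lemma Gs_closed {K} (tK : topology K) F n : (forall k, is_closed tK (F k)) -> is_closed tK (Gs F n).
Proof. intros H. unfold Gs. apply closed_all. intros t. apply closed_imp. auto. Qed.

Lemma Gs_lor {K} (F : nat -> K -> Prop) a b z : Gs F (Nat.lor a b) z <-> Gs F a z /\ Gs F b z.
Proof. unfold Gs. split.
 - intros H; split; intros t ht; apply H; rewrite Nat.lor_spec, ht; auto with bool.
 - intros [H1 H2] t ht. rewrite Nat.lor_spec in ht. apply Bool.orb_true_iff in ht. destruct ht; auto. Qed.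

Lemma Gs_0 {K} (F : nat -> K -> Prop) z : Gs F 0%nat z.
Proof. intros t ht. rewrite Nat.bits_0 in ht. discriminate. Qed.

Lemma Gs_pow {K} (F : nat -> K -> Prop) k z : Gs F (2^k)%nat z <-> F k z.
Proof. unfold Gs. split.
 - intros H; apply H. rewrite Nat.pow2_bits_eqb. apply Nat.eqb_refl.
 - intros H t ht. rewrite Nat.pow2_bits_eqb in ht. apply Nat.eqb_eq in ht. subst; auto. Qed.

Lemma KC {K} (tK : topology K) (F : nat -> K -> Prop) (x0 : K) (Z : K -> Prop) :
  Defs.compact tK -> (forall k, is_closed tK (F k)) -> is_closed tK Z ->
  (forall z, (forall n, Gs F n x0 -> Gs F n z) -> Z z -> False) ->
  exists n, Gs F n x0 /\ forall z, Gs F n z -> Z z -> False.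
Proof.
  intros HK HF HZ H.
  destruct (compact_closed_cover tK Z (fun n z => Gs F n x0 /\ ~ Gs F n z) HK HZ) as [l Hl].
  - intros n. apply open_cond. intros _. apply (Gs_closed tK F n HF).
  - intros z Zz. apply NNPP; intros Hn. apply (H z); auto.
    intros n hn. apply NNPP; intros hz. apply Hn; eauto.
  - assert (Hp : exists p, Gs F p x0 /\ forall n, In n l -> Gs F n x0 -> forall z, Gs F p z -> Gs F n z).
    { clear Hl. induction l as [|a l IH].
      - exists 0%nat. split. apply Gs_0. intros n [].
      - destruct IH as [p [Hp1 Hp2]]. destruct (classic (Gs F a x0)) as [ha|ha].
        + exists (Nat.lor a p). split. apply Gs_lor; auto.
          intros n [<-|hn] hx z hz; apply Gs_lor in hz; destruct hz as [h1 h2]; eauto.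
        + exists p. split; auto. intros n [<-|hn] hx z hz. contradiction. eauto. }
    destruct Hp as [p [Hp1 Hp2]]. exists p. split; auto.
    intros z hz Zz. destruct (Hl z Zz) as [n [hn [h1 h2]]]. apply h2. eauto.
Qed.

Lemma tube {K} (tK : topology K) {I : Type} (Sep : K -> K -> I -> Prop) (C D : K -> Prop) :
  Defs.compact tK -> is_closed tK C -> is_closed tK D ->
  (forall c d a, Sep c d a -> exists U V, is_open tK U /\ is_open tK V /\ U c /\ V d /\
       forall z w, U z -> V w -> Sep z w a) ->
  (forall c d, C c -> D d -> exists a, Sep c d a) ->
  exists U V (L : list I), is_open tK U /\ is_open tK V /\ (forall c, C c -> U c) /\ (forall d, D d -> V d) /\
    forall z w, U z -> V w -> exists a, In a L /\ Sep z w a.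
Proof.
  intros HK HC HD Hrect Hsep.
  assert (Hc : forall c, C c -> exists U V (L : list I), is_open tK U /\ is_open tK V /\ U c /\ (forall d, D d -> V d) /\
    forall z w, U z -> V w -> exists a, In a L /\ Sep z w a).
  { intros c Cc.
    set (valid := fun (j : I * (K -> Prop) * (K -> Prop)) => let '(a, U, V) := j in
       is_open tK U /\ is_open tK V /\ U c /\ forall z w, U z -> V w -> Sep z w a).
    destruct (compact_closed_cover tK D (fun j w => valid j /\ (snd j) w) HK HD) as [l Hl].
    - intros [[a U] V]. apply open_cond. intros [_ [h _]]. exact h.
    - intros d Dd. destruct (Hsep c d Cc Dd) as [a Ha]. destruct (Hrect c d a Ha) as [U [V [h1 [h2 [h3 [h4 h5]]]]]].
      exists (a, U, V). unfold valid; simpl; repeat split; auto.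
    - exists (fun z => forall j, In j l -> valid j -> (snd (fst j)) z).
      exists (fun w => exists j, In j l /\ valid j /\ (snd j) w).
      exists (map (fun j => fst (fst j)) l).
      split; [|split; [|split; [|split]]].
      + apply open_list_all. intros [[a U] V] _. apply open_imp. intros [h _]; exact h.
      + apply (open_ext tK (fun w => exists j, In j l /\ valid j /\ snd j w)). tauto.
        apply open_ex. intros [[a U] V]. apply open_cond. intros _. apply open_cond. intros [_ [h _]]. exact h.
      + intros [[a U] V] _ [_ [_ [h _]]]; exact h.
      + intros d Dd. destruct (Hl d Dd) as [j [h1 [h2 h3]]]. eauto.
      + intros z w hz [[[a U] V] [h1 [h2 h3]]]. exists a. split.
        * apply (in_map (fun j => fst (fst j)) l (a, U, V)); auto.
        * pose proof h2 as h2x. destruct h2x as [_ [_ [_ h4]]]. apply h4; auto. apply (hz (a, U, V)); auto. }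
  set (valid2 := fun (j : (K -> Prop) * (K -> Prop) * list I) => let '(U, V, L) := j in
     is_open tK U /\ is_open tK V /\ (forall d, D d -> V d) /\
       forall z w, U z -> V w -> exists a, In a L /\ Sep z w a).
  destruct (compact_closed_cover tK C (fun j z => valid2 j /\ (fst (fst j)) z) HK HC) as [l Hl].
  - intros [[U V] L]. apply open_cond. intros [h _]; exact h.
  - intros c Cc. destruct (Hc c Cc) as [U [V [L [h1 [h2 [h3 [h4 h5]]]]]]].
    exists (U, V, L). unfold valid2; simpl; repeat split; auto.
  - exists (fun z => exists j, In j l /\ valid2 j /\ (fst (fst j)) z).
    exists (fun w => forall j, In j l -> valid2 j -> (snd (fst j)) w).
    exists (flat_map (fun j => snd j) l).
    split; [|split; [|split; [|split]]].
    + apply open_ex. intros [[U V] L]. apply open_cond. intros _. apply open_cond. intros [h _]. exact h.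
    + apply open_list_all. intros [[U V] L] _. apply open_imp. intros [_ [h _]]; exact h.
    + intros c Cc. destruct (Hl c Cc) as [j [h1 [h2 h3]]]. eauto.
    + intros d Dd [[U V] L] _ [_ [_ [h _]]]. simpl. auto.
    + intros z w [[[U V] L] [h1 [h2 h3]]] hw.
      pose proof h2 as h2'. destruct h2' as [_ [_ [_ h4]]].
      destruct (h4 z w h3 (hw (U, V, L) h1 h2)) as [a [ha1 ha2]].
      exists a. split; auto. apply in_flat_map. exists (U, V, L). simpl; auto.
Qed.
Definition q (n : nat) : R := let (a, b) := Cantor.of_nat n in let (c, d) := Cantor.of_nat a in (INR c - INR d) / INR (S b).

Lemma IZR_split k : IZR k = INR (Z.to_nat k) - INR (Z.to_nat (- k)).
Proof. destruct k as [|p|p]; simpl.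
 - lra.
 - rewrite INR_IZR_INZ, Znat.positive_nat_Z. simpl. lra.
 - rewrite INR_IZR_INZ, Znat.positive_nat_Z. rewrite <- Pos2Z.opp_pos, opp_IZR. lra. Qed.

Lemma q_dense x y : x < y -> exists n, x < q n < y.
Proof.
  intros Hxy. destruct (archimed_cor1 (y - x)) as [N [HN1 HN2]]. lra.
  assert (HNp : 0 < INR N) by (apply lt_0_INR; auto).
  destruct (archimed (x * INR N)) as [Hu1 Hu2].
  set (k := up (x * INR N)) in *.
  exists (Cantor.to_nat (Cantor.to_nat (Z.to_nat k, Z.to_nat (- k)), Nat.pred N)).
  unfold q. rewrite !Cantor.cancel_of_to. rewrite <- IZR_split.
  replace (S (Nat.pred N)) with N by lia.
  split.
  - apply (Rmult_lt_reg_r (INR N)); auto. unfold Rdiv. rewrite Rmult_assoc, Rinv_l; lra.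
  - assert (IZR k / INR N <= x + / INR N).
    { apply (Rmult_le_reg_r (INR N)); auto. unfold Rdiv. rewrite Rmult_assoc, Rinv_l by lra.
      rewrite Rmult_plus_distr_r, Rinv_l by lra. lra. }
    lra.
Qed.

Lemma q_between x y : x < y -> exists n m, x < q n /\ q n < q m /\ q m < y.
Proof. intros H. destruct (q_dense x ((x+y)/2)) as [n Hn]. lra. destruct (q_dense ((x+y)/2) y) as [m Hm]. lra.
 exists n, m. lra. Qed.

Lemma Ropen_int a b : R_open (fun t => a < t < b).
Proof. intros x Hx. exists (Rmin (x - a) (b - x)). split.
 - apply Rmin_case; lra.
 - intros y Hy. apply Rabs_def2 in Hy. destruct Hy as [H1 H2].
   pose proof (Rmin_l (x-a) (b-x)). pose proof (Rmin_r (x-a) (b-x)). lra. Qed.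

Lemma Ropen_lt a : R_open (fun t => t < a).
Proof. intros x Hx. exists (a - x). split. lra. intros y Hy. apply Rabs_def2 in Hy. lra. Qed.

Lemma Ropen_gt a : R_open (fun t => a < t).
Proof. intros x Hx. exists (x - a). split. lra. intros y Hy. apply Rabs_def2 in Hy. lra. Qed.

Lemma Ropen_out a b : R_open (fun t => t < a \/ b < t).
Proof. intros x [Hx|Hx].
 - destruct (Ropen_lt a x Hx) as [e [He H]]. exists e; split; [auto|]. intros y Hy; left; auto.
 - destruct (Ropen_gt b x Hx) as [e [He H]]. exists e; split; [auto|]. intros y Hy; right; auto. Qed.

Lemma Ropen_ball c e : R_open (fun t => Rabs (t - c) < e).
Proof. intros x Hx. exists (e - Rabs (x - c)). split; [lra|].
 intros y Hy. pose proof (Rabs_triang (y - x) (x - c)) as Ht.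
 replace (y - x + (x - c)) with (y - c) in Ht by ring. lra. Qed.

Definition dec2 (n : nat) : nat * nat := Cantor.of_nat n.
Lemma dec2_surj p : exists n, dec2 n = p.
Proof. exists (Cantor.to_nat p). apply Cantor.cancel_of_to. Qed.

Definition mask_of (l : list nat) : nat := fold_right (fun t acc => Nat.lor (2^t)%nat acc) 0%nat l.
Lemma mask_of_spec l t : Nat.testbit (mask_of l) t = true <-> In t l.
Proof. induction l as [|a l IH]; simpl.
 - rewrite Nat.bits_0. split; [discriminate| tauto].
 - rewrite Nat.lor_spec, Nat.pow2_bits_eqb, Bool.orb_true_iff, IH, Nat.eqb_eq. split; intros [h|h]; auto. Qed.
Definition Env {X K} (tX : topology X) (tK : topology K) (e : X -> K) (F : nat -> K -> Prop) : Prop :=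
  Defs.compact tK /\ (forall k, is_closed tK (F k)) /\
  (forall U, is_open tX U -> exists V, is_open tK V /\ forall x, U x <-> V (e x)) /\
  (forall (x : X) (y : K), ~ (exists x', e x' = y) -> exists n, F n (e x) /\ ~ F n y).

Lemma nag_G {X K} tX tK (e : X -> K) F : Env tX tK e F ->
  forall x z, (forall n, Gs F n (e x) -> Gs F n z) -> exists y, e y = z.
Proof. intros [_ [_ [_ HN]]] x z H. apply NNPP; intros Hn.
 destruct (HN x z Hn) as [k [h1 h2]]. apply h2. apply (proj1 (Gs_pow F k z)). apply H. apply (proj2 (Gs_pow F k (e x))); auto. Qed.

Lemma embed_open {X K} tX tK (e : X -> K) F (f : X -> R) W : Env tX tK e F -> continuous_R tX f -> R_open W ->
  exists V, is_open tK V /\ forall x, W (f x) <-> V (e x).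
Proof. intros [_ [_ [HE _]]] Hf HW. apply HE. apply Hf; auto. Qed.

Lemma CG_closed {X K} tX tK (e : X -> K) F x : Env tX tK e F -> is_closed tK (fun z => forall n, Gs F n (e x) -> Gs F n z).
Proof. intros [_ [HF _]]. apply closed_all; intros n. apply closed_imp; intros _. apply Gs_closed; auto. Qed.



Lemma sep_exist {X K} tX tK (e : X -> K) F {I : Type} (Phi : I -> X -> R) (f : X -> R) :
  Env tX tK e F -> (forall i, continuous_R tX (Phi i)) ->
  (forall x y, x <> y -> exists i, Phi i x <> Phi i y) -> continuous_R tX f ->
  forall x y qa qb, f x < qa -> qa < qb -> qb < f y ->
  exists n m (L : list I), Gs F n (e x) /\ Gs F m (e y) /\
    forall y0 y1, Gs F n (e y0) -> f y0 <= qa -> Gs F m (e y1) -> qb <= f y1 ->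
      exists a, In a L /\ Phi a y0 <> Phi a y1.
Proof.
  intros Henv HPhi Hsep Hf x y qa qb H1 H2 H3.
  pose proof Henv as [HK [HF [HE HN]]].
  destruct (embed_open tX tK e F f (fun t => qa < t) Henv Hf (Ropen_gt qa)) as [V1 [HV1o HV1]].
  destruct (embed_open tX tK e F f (fun t => t < qb) Henv Hf (Ropen_lt qb)) as [V2 [HV2o HV2]].
  set (C := fun z => (forall n, Gs F n (e x) -> Gs F n z) /\ ~ V1 z).
  set (D := fun z => (forall n, Gs F n (e y) -> Gs F n z) /\ ~ V2 z).
  set (Sep := fun (z w : K) (a : I) => exists a1 b1 a2 b2 U V, is_open tK U /\ is_open tK V /\
     (forall x, a1 < Phi a x < b1 <-> U (e x)) /\ (forall x, a2 < Phi a x < b2 <-> V (e x)) /\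
     (b1 <= a2 \/ b2 <= a1) /\ U z /\ V w).
  destruct (tube tK Sep C D HK) as [U [V [L [HUo [HVo [HCU [HDV HUV]]]]]]].
  - apply closed_and. apply (CG_closed tX tK e F x Henv). apply closed_compl; auto.
  - apply closed_and. apply (CG_closed tX tK e F y Henv). apply closed_compl; auto.
  - intros c d a [a1 [b1 [a2 [b2 [U [V [h1 [h2 [h3 [h4 [h5 [h6 h7]]]]]]]]]]]].
    exists U, V. refine (conj h1 (conj h2 (conj h6 (conj h7 _)))). intros z w hz hw.
    exists a1, b1, a2, b2, U, V. exact (conj h1 (conj h2 (conj h3 (conj h4 (conj h5 (conj hz hw)))))).
  - intros c d [Cc1 Cc2] [Dd1 Dd2].
    destruct (nag_G tX tK e F Henv x c Cc1) as [u <-].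
    destruct (nag_G tX tK e F Henv y d Dd1) as [v <-].
    assert (fu : f u <= qa). { destruct (Rle_dec (f u) qa); auto. exfalso; apply Cc2, HV1; lra. }
    assert (fv : qb <= f v). { destruct (Rle_dec qb (f v)); auto. exfalso; apply Dd2, HV2; lra. }
    assert (uv : u <> v). { intros <-. lra. }
    destruct (Hsep u v uv) as [a Ha]. exists a.
    destruct (Rtotal_order (Phi a u) (Phi a v)) as [Hl|[He|Hg]]; [| contradiction |].
    + set (m0 := (Phi a u + Phi a v) / 2).
      destruct (embed_open tX tK e F (Phi a) (fun t => Phi a u - 1 < t < m0) Henv (HPhi a) (Ropen_int _ _)) as [U [HUo HU]].
      destruct (embed_open tX tK e F (Phi a) (fun t => m0 < t < Phi a v + 1) Henv (HPhi a) (Ropen_int _ _)) as [V [HVo HV]].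
      exists (Phi a u - 1), m0, m0, (Phi a v + 1), U, V.
      refine (conj HUo (conj HVo (conj HU (conj HV (conj (or_introl (Rle_refl _)) (conj _ _)))))).
      apply HU; unfold m0; lra. apply HV; unfold m0; lra.
    + set (m0 := (Phi a u + Phi a v) / 2).
      destruct (embed_open tX tK e F (Phi a) (fun t => m0 < t < Phi a u + 1) Henv (HPhi a) (Ropen_int _ _)) as [U [HUo HU]].
      destruct (embed_open tX tK e F (Phi a) (fun t => Phi a v - 1 < t < m0) Henv (HPhi a) (Ropen_int _ _)) as [V [HVo HV]].
      exists m0, (Phi a u + 1), (Phi a v - 1), m0, U, V.
      refine (conj HUo (conj HVo (conj HU (conj HV (conj (or_intror (Rle_refl _)) (conj _ _)))))).
      apply HU; unfold m0; lra. apply HV; unfold m0; lra.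
  - destruct (KC tK F (e x) (fun z => ~ V1 z /\ ~ U z) HK HF) as [n [Hn1 Hn2]].
    + apply closed_and; apply closed_compl; auto.
    + intros z hz [hz1 hz2]. apply hz2. apply HCU. split; auto.
    + destruct (KC tK F (e y) (fun z => ~ V2 z /\ ~ V z) HK HF) as [m [Hm1 Hm2]].
      * apply closed_and; apply closed_compl; auto.
      * intros z hz [hz1 hz2]. apply hz2. apply HDV. split; auto.
      * exists n, m, L. split; [auto|split; [auto|]].
        intros y0 y1 g0 f0 g1 f1.
        assert (U (e y0)). { apply NNPP; intros h. apply (Hn2 (e y0) g0). split; auto. intros h'; apply HV1 in h'; lra. }
        assert (V (e y1)). { apply NNPP; intros h. apply (Hm2 (e y1) g1). split; auto. intros h'; apply HV2 in h'; lra. }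
        destruct (HUV (e y0) (e y1)) as [a [ha1 ha2]]; auto.
        exists a. split; auto.
        destruct ha2 as [a1 [b1 [a2 [b2 [U' [V' [h1 [h2 [h3 [h4 [h5 [h6 h7]]]]]]]]]]]].
        apply h3 in h6. apply h4 in h7. lra.
Qed.
Definition factors {X I} (Phi : I -> X -> R) (J : nat -> I) (f : X -> R) : Prop :=
  forall x y, (forall k, Phi (J k) x = Phi (J k) y) -> f x = f y.

Lemma factor {X K} tX tK (e : X -> K) F {I : Type} (Phi : I -> X -> R) (d0 : I) (f : X -> R) :
  Env tX tK e F -> (forall i, continuous_R tX (Phi i)) ->
  (forall x y, x <> y -> exists i, Phi i x <> Phi i y) -> continuous_R tX f ->
  exists J : nat -> I, factors Phi J f.
Proof.
  intros Henv HPhi Hsep Hf.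
  set (P := fun (a b n m : nat) (L : list I) => forall y0 y1, Gs F n (e y0) -> f y0 <= q a -> Gs F m (e y1) -> q b <= f y1 ->
      exists al, In al L /\ Phi al y0 <> Phi al y1).
  set (Lsel := fun u : nat => let (a, r1) := dec2 u in let (b, r2) := dec2 r1 in let (n, m) := dec2 r2 in
     match excluded_middle_informative (exists L, P a b n m L) with
     | left h => proj1_sig (constructive_indefinite_description _ h)
     | right _ => nil end).
  exists (fun w => let (u, i) := dec2 w in nth i (Lsel u) d0).
  assert (Hlt : forall x y, (forall k, Phi ((fun w => let (u, i) := dec2 w in nth i (Lsel u) d0) k) x =
                                      Phi ((fun w => let (u, i) := dec2 w in nth i (Lsel u) d0) k) y) -> f x < f y -> False).
  { intros x y Hk Hxy. destruct (q_between _ _ Hxy) as [a [b [Ha [Hab Hb]]]].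
    destruct (sep_exist tX tK e F Phi f Henv HPhi Hsep Hf x y (q a) (q b) Ha Hab Hb) as [n [m [L [Hn [Hm HL]]]]].
    set (u := Cantor.to_nat (a, Cantor.to_nat (b, Cantor.to_nat (n, m)))).
    assert (HLs : P a b n m (Lsel u)).
    { unfold Lsel, u, dec2. rewrite !Cantor.cancel_of_to.
      destruct (excluded_middle_informative (exists L, P a b n m L)) as [h|h].
      - exact (proj2_sig (constructive_indefinite_description _ h)).
      - exfalso; apply h. exists L. exact HL. }
    destruct (HLs x y Hn (Rlt_le _ _ Ha) Hm (Rlt_le _ _ Hb)) as [al [hal1 hal2]].
    destruct (In_nth _ _ d0 hal1) as [i [_ hi]].
    apply hal2. specialize (Hk (Cantor.to_nat (u, i))). unfold dec2 in Hk. rewrite !Cantor.cancel_of_to in Hk. rewrite hi in Hk. exact Hk. }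
  intros x y Hk. destruct (Rtotal_order (f x) (f y)) as [h|[h|h]].
  - exfalso; exact (Hlt x y Hk h).
  - exact h.
  - exfalso; apply (Hlt y x); [intros k; symmetry; apply Hk | exact h].
Qed.

Definition tk (t : nat) : nat := fst (dec2 t).
Definition tr (t : nat) : nat := fst (dec2 (snd (dec2 t))).
Definition ts (t : nat) : nat := snd (dec2 (snd (dec2 t))).

Lemma tcode k r s : exists t, tk t = k /\ tr t = r /\ ts t = s.
Proof. exists (Cantor.to_nat (k, Cantor.to_nat (r, s))). unfold tk, tr, ts, dec2. rewrite !Cantor.cancel_of_to. cbn [fst snd].
 rewrite !Cantor.cancel_of_to. auto. Qed.

Lemma list_filter_ex {A} (P : A -> Prop) (l : list A) : exists l', (forall a, In a l' -> P a) /\ (forall a, In a l -> P a -> In a l').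
Proof. induction l as [|a l [l' [H1 H2]]].
 - exists nil. simpl; tauto.
 - destruct (classic (P a)) as [h|h].
   + exists (a :: l'). split. intros b [<-|hb]; auto. intros b [<-|hb] hp; simpl; auto.
   + exists l'. split; auto. intros b [<-|hb] hp; auto. contradiction. Qed.

Lemma netN {X K} tX tK (e : X -> K) F {I : Type} (Phi : I -> X -> R) (J : nat -> I) (f : X -> R) :
  Env tX tK e F -> (forall i, continuous_R tX (Phi i)) -> continuous_R tX f -> factors Phi J f ->
  forall x eps, 0 < eps ->
  exists n L, Gs F n (e x) /\ (forall t, In t L -> q (tr t) < Phi (J (tk t)) x < q (ts t)) /\
    forall y, Gs F n (e y) -> (forall t, In t L -> q (tr t) <= Phi (J (tk t)) y <= q (ts t)) -> Rabs (f y - f x) < eps.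
Proof.
  intros Henv HPhi Hf Hfac x eps Heps.
  pose proof Henv as [HK [HF [HE HN]]].
  destruct (embed_open tX tK e F f (fun t => Rabs (t - f x) < eps) Henv Hf (Ropen_ball _ _)) as [V0 [HV0o HV0]].
  set (D := fun z => (forall n, Gs F n (e x) -> Gs F n z) /\ ~ V0 z).
  set (valid := fun t => q (tr t) < Phi (J (tk t)) x < q (ts t)).
  set (O := fun t z => exists U, (is_open tK U /\ (forall y, (Phi (J (tk t)) y < q (tr t) \/ q (ts t) < Phi (J (tk t)) y) <-> U (e y)) /\ valid t) /\ U z).
  destruct (compact_closed_cover tK D O HK) as [L0 HL0].
  - apply closed_and. apply (CG_closed tX tK e F x Henv). apply closed_compl; auto.
  - intros t. apply open_union. intros U [h _]; exact h.
  - intros z [Dz1 Dz2]. destruct (nag_G tX tK e F Henv x z Dz1) as [u <-].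
    assert (fu : f u <> f x). { intros h. apply Dz2, HV0. rewrite h. unfold Rminus; rewrite Rplus_opp_r, Rabs_R0; auto. }
    assert (Hk : exists k, Phi (J k) u <> Phi (J k) x).
    { apply NNPP; intros h. apply fu, Hfac. intros k. apply NNPP; intros h'. apply h; eauto. }
    destruct Hk as [k Hk].
    assert (Hrs : exists r s, q r < Phi (J k) x < q s /\ (Phi (J k) u < q r \/ q s < Phi (J k) u)).
    { destruct (Rtotal_order (Phi (J k) u) (Phi (J k) x)) as [h|[h|h]]; [|contradiction|].
      - destruct (q_dense _ _ h) as [r Hr]. destruct (q_dense (Phi (J k) x) (Phi (J k) x + 1)) as [s Hs]. lra.
        exists r, s. split. lra. left; lra.
      - destruct (q_dense _ _ h) as [s Hs]. destruct (q_dense (Phi (J k) x - 1) (Phi (J k) x)) as [r Hr]. lra.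
        exists r, s. split. lra. right; lra. }
    destruct Hrs as [r [s [Hrs1 Hrs2]]].
    destruct (tcode k r s) as [t [ek [er es]]].
    destruct (embed_open tX tK e F (Phi (J k)) (fun v => v < q r \/ q s < v) Henv (HPhi (J k)) (Ropen_out _ _)) as [U [HUo HU]].
    exists t. exists U. rewrite ek, er, es. unfold valid. rewrite ek, er, es. split. split; auto. apply HU; auto.
  - destruct (list_filter_ex valid L0) as [L [HL1 HL2]].
    destruct (KC tK F (e x) (fun z => ~ V0 z /\ forall t, In t L0 -> ~ O t z) HK HF) as [n [Hn1 Hn2]].
    + apply closed_and. apply closed_compl; auto. apply closed_all; intros t. apply closed_imp; intros _.
      apply closed_compl. apply open_union. intros U [h _]; exact h.
    + intros z hz [hz1 hz2]. destruct (HL0 z (conj hz hz1)) as [t [ht1 ht2]]. eapply hz2; eauto.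
    + exists n, L. split; auto. split; auto.
      intros y Hy Hbox. apply NNPP; intros Hne. apply (Hn2 (e y) Hy). split.
      * intros h; apply Hne, HV0; auto.
      * intros t ht [U [[h1 [h2 h3]] h4]]. apply h2 in h4. specialize (Hbox t (HL2 t ht h3)). lra.
Qed.
Definition bitsP {X K} (e : X -> K) F (Phi : cont * cont -> X -> R) (J : nat -> cont * cont) (f : X -> R) (m : nat) : Prop :=
  let (n, r1) := dec2 m in let (mask, r2) := dec2 r1 in let (a, b) := dec2 r2 in
  forall y, Gs F n (e y) -> (forall t, Nat.testbit mask t = true -> q (tr t) <= Phi (J (tk t)) y <= q (ts t)) ->
    q a < f y < q b.

Lemma card_main {X K} tX tK (e : X -> K) F (Phi : cont * cont -> X -> R) :
  Env tX tK e F -> (forall i, continuous_R tX (Phi i)) ->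
  (forall x y, x <> y -> exists i, Phi i x <> Phi i y) -> card_CX_le_c tX.
Proof.
  intros Henv HPhi Hsep.
  set (d0 := ((fun _ : nat => false), (fun _ : nat => false)) : cont * cont).
  set (Jf := fun f : X -> R => match excluded_middle_informative (exists J, factors Phi J f) with
     | left h => proj1_sig (constructive_indefinite_description _ h) | right _ => fun _ => d0 end).
  assert (HJf : forall f, continuous_R tX f -> factors Phi (Jf f) f).
  { intros f Hf. unfold Jf. destruct (excluded_middle_informative (exists J, factors Phi J f)) as [h|h].
    - exact (proj2_sig (constructive_indefinite_description _ h)).
    - exfalso; apply h. exact (factor tX tK e F Phi d0 f Henv HPhi Hsep Hf). }
  set (bits := fun (f : X -> R) (m : nat) => if excluded_middle_informative (bitsP e F Phi (Jf f) f m) then true else false).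
  exists (fun f w => let (a, j) := dec2 w in match a with
     | O => bits f j
     | S k => let (side, j') := dec2 j in match side with O => fst (Jf f k) j' | S _ => snd (Jf f k) j' end end).
  intros f1 f2 Hf1 Hf2 Hc.
  assert (Hw : forall w, (let (a, j) := dec2 w in match a with
     | O => bits f1 j
     | S k => let (side, j') := dec2 j in match side with O => fst (Jf f1 k) j' | S _ => snd (Jf f1 k) j' end end) =
     (let (a, j) := dec2 w in match a with
     | O => bits f2 j
     | S k => let (side, j') := dec2 j in match side with O => fst (Jf f2 k) j' | S _ => snd (Jf f2 k) j' end end)).
  { intros w. exact (equal_f Hc w). }
  assert (HJ : Jf f1 = Jf f2).
  { apply functional_extensionality; intros k.
    apply injective_projections; apply functional_extensionality; intros j.
    - specialize (Hw (Cantor.to_nat (S k, Cantor.to_nat (0%nat, j)))). unfold dec2 in Hw.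
      rewrite !Cantor.cancel_of_to in Hw. exact Hw.
    - specialize (Hw (Cantor.to_nat (S k, Cantor.to_nat (1%nat, j)))). unfold dec2 in Hw.
      rewrite !Cantor.cancel_of_to in Hw. exact Hw. }
  assert (HB : forall m, bits f1 m = bits f2 m).
  { intros m. specialize (Hw (Cantor.to_nat (0%nat, m))). unfold dec2 in Hw.
    rewrite !Cantor.cancel_of_to in Hw. exact Hw. }
  apply functional_extensionality; intros x. apply NNPP; intros Hne.
  set (delta := Rabs (f1 x - f2 x)).
  assert (Hd : 0 < delta). { unfold delta. apply Rabs_pos_lt. intros h; apply Hne; lra. }
  destruct (netN tX tK e F Phi (Jf f1) f1 Henv HPhi Hf1 (HJf f1 Hf1) x (delta / 3)) as [n [L [Hn [HLx HL]]]]. lra.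
  destruct (q_dense (f1 x - 2 * (delta / 3)) (f1 x - delta / 3)) as [a Ha]. lra.
  destruct (q_dense (f1 x + delta / 3) (f1 x + 2 * (delta / 3))) as [b Hb]. lra.
  set (m := Cantor.to_nat (n, Cantor.to_nat (mask_of L, Cantor.to_nat (a, b)))).
  assert (Hb1 : bitsP e F Phi (Jf f1) f1 m).
  { unfold bitsP, m, dec2. rewrite !Cantor.cancel_of_to.
    intros y Hy Hbox. assert (Rabs (f1 y - f1 x) < delta / 3).
    { apply HL; auto. intros t ht. apply Hbox. apply mask_of_spec; auto. }
    apply Rabs_def2 in H. lra. }
  assert (Hb2 : bitsP e F Phi (Jf f2) f2 m).
  { assert (bits f1 m = true). { unfold bits. destruct (excluded_middle_informative (bitsP e F Phi (Jf f1) f1 m)) as [h|h]; [reflexivity|contradiction]. }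
    rewrite HB in H. unfold bits in H. destruct (excluded_middle_informative (bitsP e F Phi (Jf f2) f2 m)) as [h|h]; [exact h|discriminate]. }
  rewrite <- HJ in Hb2. unfold bitsP, m, dec2 in Hb2. rewrite !Cantor.cancel_of_to in Hb2.
  assert (Hx2 : q a < f2 x < q b).
  { apply Hb2; auto. intros t ht. apply mask_of_spec in ht. specialize (HLx t ht). lra. }
  unfold delta in *. destruct (Rcase_abs (f1 x - f2 x)) as [h|h].
  - rewrite Rabs_left in Hd, Ha, Hb by lra. lra.
  - rewrite Rabs_right in Hd, Ha, Hb by lra. lra.
Qed.
Lemma const_cont {X} (tX : topology X) (c : R) : continuous_R tX (fun _ => c).
Proof. intros U _. destruct (classic (U c)) as [h|h].
 - apply (open_ext tX (fun _ => True)). tauto. apply open_full.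
 - apply (open_ext tX (fun _ => False)). tauto. apply open_empty. Qed.

Lemma w_from_card {X} (tX : topology X) : tychonoff tX -> card_CX_le_c tX -> w_le_c tX.
Proof.
  intros [HT1 Hreg] [g Hg].
  exists (fun i y => exists U, (exists f, continuous_R tX f /\ g f = i /\ U = (fun z => f z < 1/2)) /\ U y).
  split.
  - intros i. apply open_union. intros U [f [Hf [_ ->]]]. exact (Hf _ (Ropen_lt _)).
  - intros U x HU Ux.
    destruct (Hreg (fun z => ~ U z) x (closed_compl tX U HU)) as [h [Hh [Hx Hc]]]. tauto.
    exists (g h). split.
    + exists (fun z => h z < 1/2). split. exists h; auto. lra.
    + intros y [V [[f [Hf [Hgf ->]]] Hy]]. rewrite <- (Hg f h Hf Hh Hgf) in Hc.
      apply NNPP; intros hn. specialize (Hc y hn). lra.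
Qed.

Lemma Phi_exists {X} (tX : topology X) : tychonoff tX -> nw_le_c tX ->
  exists Phi : cont * cont -> X -> R, (forall i, continuous_R tX (Phi i)) /\
    (forall x y, x <> y -> exists i, Phi i x <> Phi i y).
Proof.
  intros [HT1 Hreg] [N HN].
  set (Good := fun (ij : cont * cont) (h : X -> R) => continuous_R tX h /\ (forall y, N (fst ij) y -> h y < 1/3) /\ (forall y, N (snd ij) y -> 2/3 < h y)).
  exists (fun ij => match excluded_middle_informative (exists h, Good ij h) with
     | left H => proj1_sig (constructive_indefinite_description _ H) | right _ => fun _ => 0 end).
  split.
  - intros ij. destruct (excluded_middle_informative (exists h, Good ij h)) as [H|H].
    + exact (proj1 (proj2_sig (constructive_indefinite_description _ H))).
    + apply const_cont.
  - intros x y Hxy. destruct (HT1 x y Hxy) as [U [HU [Ux Uy]]].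
    destruct (Hreg (fun z => ~ U z) x (closed_compl tX U HU)) as [h [Hh [Hx Hc]]]. tauto.
    destruct (HN (fun z => h z < 1/3) x) as [i [Hi1 Hi2]]. exact (Hh _ (Ropen_lt _)). lra.
    destruct (HN (fun z => 2/3 < h z) y) as [j [Hj1 Hj2]]. exact (Hh _ (Ropen_gt _)). rewrite (Hc y Uy). lra.
    exists (i, j). destruct (excluded_middle_informative (exists h, Good (i, j) h)) as [H|H].
    + destruct (proj2_sig (constructive_indefinite_description _ H)) as [_ [H1 H2]].
      specialize (H1 x Hi1). specialize (H2 y Hj1). simpl in *. lra.
    + exfalso. apply H. exists h. split; auto.
Qed.

Theorem corollary1 (X K : Type) (tX : topology X) (tK : topology K) (e : X -> K) :
  tychonoff tX ->
  stone_cech tX tK e ->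
  nagami_le_omega tK e ->
  nw_le_c tX ->
  card_CX_le_c tX /\ w_le_c tX.
Proof.
  intros HT [HK [_ [_ [_ [Hemb _]]]]] [F [HF HN]] Hnw.
  assert (Henv : Env tX tK e F) by (repeat split; auto).
  destruct (Phi_exists tX HT Hnw) as [Phi [HPhi Hsep]].
  assert (Hc : card_CX_le_c tX) by exact (card_main tX tK e F Phi Henv HPhi Hsep).
  split; auto. apply w_from_card; auto.
Qed.
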